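(* Let $n\ge 4$ and let $W_n^\sigma=(W_n,\sigma)$ be a signed wheel with central vertex $v_0$. Then $W_n^\sigma$ is distance compatible if and only if it contains no negative $4$-cycle (cycle of length $4$ whose product of edge signs is $-1$) having $v_0$ as one of its vertices.
   Context: The wheel $W_n$ is the join of the cycle $C_n$ with a single vertex $v_0$ (the central vertex); the vertices of $C_n$ are the rim vertices. A signed graph $\Sigma=(G,\sigma)$ consists of a finite simple connected graph $G=(V,E)$ and a signature $\sigma:E\to\{+1,-1\}$; the sign of a path or cycle is the product of its edge signs. For vertices $u,v$, $d(u,v)$ denotes the usual distance in $G$. Set $\sigma_{\max}(uv)=-1$ if every shortest $u$–$v$ path has sign $-1$, and $\sigma_{\max}(uv)=+1$ otherwise; set $\sigma_{\min}(uv)=+1$ if every shortest $u$–$v$ path has sign $+1$, and $\sigma_{\min}(uv)=-1$ otherwise. $\Sigma$ is (distance) compatible if $\sigma_{\max}(uv)d(u,v)=\sigma_{\min}(uv)d(u,v)$ for all vertices $u,v$. *)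

(* Defs.v *)
From mathcomp Require Import all_boot all_order all_algebra.
Set Implicit Arguments. Unset Strict Implicit. Unset Printing Implicit Defensive.
Import GRing.Theory Num.Theory.
Local Open Scope ring_scope.

(* A walk from u is a seq p of successive vertices (u itself excluded),    *)
(* of length size p.                                                        *)

Definition is_walk (T : finType) (adj : rel T) (u v : T) (p : seq T) : bool :=
  path adj u p && (last u p == v).

Definition has_walk (T : finType) (adj : rel T) (k : nat) (u v : T) : bool :=
  [exists p : k.-tuple T, is_walk adj u v p].

(* the usual distance d(u,v): least length of a u-v walk (for a connected
   graph, the least k < #|T| with a walk of length k) *)
Definition dist (T : finType) (adj : rel T) (u v : T) : nat :=
  find (fun k => has_walk adj k u v) (iota 0 #|T|).

Definition walk_sign (T : finType) (sigma : T -> T -> int) (u : T) (p : seq T)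
  : int := \prod_(e <- zip (u :: p) p) sigma e.1 e.2.

Definition sigma_max (T : finType) (adj : rel T) (sigma : T -> T -> int)
  (u v : T) : int :=
  if [forall p : (dist adj u v).-tuple T,
        is_walk adj u v p ==> (walk_sign sigma u p == -1)] then -1 else 1.

Definition sigma_min (T : finType) (adj : rel T) (sigma : T -> T -> int)
  (u v : T) : int :=
  if [forall p : (dist adj u v).-tuple T,
        is_walk adj u v p ==> (walk_sign sigma u p == 1)] then 1 else -1.

Definition compatible (T : finType) (adj : rel T) (sigma : T -> T -> int)
  : Prop :=
  forall u v : T, sigma_max adj sigma u v * (dist adj u v)%:Z
                  = sigma_min adj sigma u v * (dist adj u v)%:Z.

Definition signature (T : finType) (adj : rel T) (sigma : T -> T -> int)
  : Prop :=
  forall u v, adj u v -> sigma u v = sigma v u /\ (sigma u v = 1 \/ sigma u v = -1).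

(* The wheel W_n on vertices 'I_n.+1: vertex 0 is the centre v0, vertices
   1..n are the rim vertices, forming the cycle 1 - 2 - ... - n - 1. *)
Definition rim_next (n : nat) (i : nat) : nat := (i %% n).+1.

Definition wheel_adj (n : nat) : rel 'I_n.+1 := fun u v =>
  (u != v) &&
  [|| (val u == 0%N) && (val v != 0%N),
      (val v == 0%N) && (val u != 0%N)
    | [&& val u != 0%N, val v != 0%N &
          (val v == rim_next n u) || (val u == rim_next n v)]].

Definition wheel_center (n : nat) : 'I_n.+1 := ord0.
Arguments wheel_center n : clear implicits.

Definition neg_4cycle (T : finType) (adj : rel T) (sigma : T -> T -> int)
  (a b c d : T) : Prop :=
  [/\ uniq [:: a; b; c; d],
      [&& adj a b, adj b c, adj c d & adj d a] &
      sigma a b * sigma b c * sigma c d * sigma d a = -1].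
Arguments wheel_adj n : clear implicits.

(* Main.v *)
Require Import Defs.
From mathcomp Require Import all_boot all_order all_algebra.
From mathcomp Require Import zify ring.
Import GRing.Theory Num.Theory.
Local Open Scope ring_scope.
Set Implicit Arguments. Unset Strict Implicit. Unset Printing Implicit Defensive.

Section Gen.
Variables (T : finType) (adj : rel T) (sigma : T -> T -> int).

Lemma has_walkP k u v :
  reflect (exists p, size p = k /\ is_walk adj u v p) (has_walk adj k u v).
Proof.
apply: (iffP existsP) => [[t Ht]|[p [Hs Hp]]].
  by exists (tval t); rewrite size_tuple.
have Hs' : size p == k by apply/eqP.
by exists (Tuple Hs').
Qed.

Lemma dist_spec k u v : (k < #|T|)%N -> has_walk adj k u v ->
  [/\ (dist adj u v <= k)%N, has_walk adj (dist adj u v) u v &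
      forall j, (j < dist adj u v)%N -> ~~ has_walk adj j u v].
Proof.
move=> hk hw.
have hs : has (fun k => has_walk adj k u v) (iota 0 #|T|).
  by apply/hasP; exists k; rewrite ?mem_iota.
have hD := hs; rewrite has_find size_iota in hD.
have nthD j : (j < #|T|)%N -> nth 0%N (iota 0 #|T|) j = j.
  by move=> hj; rewrite nth_iota.
rewrite /dist; split.
- rewrite leqNgt; apply/negP => hlt.
  by have := before_find 0%N hlt; rewrite nthD // hw.
- by have := nth_find 0%N hs; rewrite nthD.
- move=> j hj; have hj' : (j < #|T|)%N by exact: ltn_trans hj hD.
  by have := before_find 0%N hj; rewrite nthD // => ->.
Qed.

Lemma walk0 u v p : size p = 0%N -> is_walk adj u v p = (u == v).
Proof. by case: p. Qed.

Lemma walk1 u v p : size p = 1%N -> is_walk adj u v p -> p = [:: v] /\ adj u v.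
Proof.
case: p => [|a [|]] //= _; rewrite /is_walk /= andbT => /andP[h /eqP e].
by subst.
Qed.

Lemma walk2 u v p : size p = 2%N -> is_walk adj u v p ->
  exists w, [/\ p = [:: w; v], adj u w & adj w v].
Proof.
case: p => [|a [|b []]] //= _; rewrite /is_walk /= andbT => /andP[/andP[h1 h2] /eqP e].
by subst; exists a.
Qed.

Lemma sign1 u v : walk_sign sigma u [:: v] = sigma u v.
Proof. by rewrite /walk_sign /= big_cons big_nil mulr1. Qed.

Lemma sign2 u w v : walk_sign sigma u [:: w; v] = sigma u w * sigma w v.
Proof. by rewrite /walk_sign /= !big_cons big_nil mulr1. Qed.

Lemma smax_1 u v p : size p = dist adj u v -> is_walk adj u v p ->
  walk_sign sigma u p != -1 -> sigma_max adj sigma u v = 1.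
Proof.
move=> hs hw hn; rewrite /sigma_max; case: ifP => // /forallP H.
have hs' : size p == dist adj u v by apply/eqP.
by have := H (Tuple hs'); rewrite /= hw /= (negbTE hn).
Qed.

Lemma smin_m1 u v p : size p = dist adj u v -> is_walk adj u v p ->
  walk_sign sigma u p != 1 -> sigma_min adj sigma u v = -1.
Proof.
move=> hs hw hn; rewrite /sigma_min; case: ifP => // /forallP H.
have hs' : size p == dist adj u v by apply/eqP.
by have := H (Tuple hs'); rewrite /= hw /= (negbTE hn).
Qed.

Lemma smax_m1 u v : (forall p, size p = dist adj u v -> is_walk adj u v p ->
  walk_sign sigma u p = -1) -> sigma_max adj sigma u v = -1.
Proof.
move=> H; rewrite /sigma_max; case: ifP => // /negbT/forallPn [t].
by rewrite negb_imply => /andP[hw]; rewrite (H _ (size_tuple t) hw) eqxx.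
Qed.

Lemma smin_1 u v : (forall p, size p = dist adj u v -> is_walk adj u v p ->
  walk_sign sigma u p = 1) -> sigma_min adj sigma u v = 1.
Proof.
move=> H; rewrite /sigma_min; case: ifP => // /negbT/forallPn [t].
by rewrite negb_imply => /andP[hw]; rewrite (H _ (size_tuple t) hw) eqxx.
Qed.

Lemma compat_at u v p0 : size p0 = dist adj u v -> is_walk adj u v p0 ->
  (walk_sign sigma u p0 = 1 \/ walk_sign sigma u p0 = -1) ->
  (forall p, size p = dist adj u v -> is_walk adj u v p ->
     walk_sign sigma u p = walk_sign sigma u p0) ->
  sigma_max adj sigma u v = sigma_min adj sigma u v.
Proof.
move=> hs hw [e|e] H.
- rewrite (smax_1 hs hw) ?e // smin_1 // => p hp hp'; by rewrite H.
- rewrite (smin_m1 hs hw) ?e // smax_m1 // => p hp hp'; by rewrite H.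
Qed.

End Gen.
Lemma modn_rim n x : (0 < x <= n)%N -> (x < n /\ x %% n = x)%N \/ (x = n /\ x %% n = 0)%N.
Proof.
move=> /andP[h1 h2]; case: (ltnP x n) => h.
  by left; rewrite modn_small.
right; have e : x = n by apply/eqP; rewrite eqn_leq h2 h.
by split=> //; rewrite e modnn.
Qed.

Lemma nonadj_nat n b c d : (4 <= n)%N -> (0 < b <= n)%N -> (0 < c <= n)%N -> (0 < d <= n)%N ->
  (c == (b %% n).+1) || (b == (c %% n).+1) -> (d == (c %% n).+1) || (c == (d %% n).+1) ->
  b != d -> ~~ ((d == (b %% n).+1) || (b == (d %% n).+1)).
Proof.
move=> h4 hb hc hd.
case: (@modn_rim _ _ hb) => [[? ->]|[? ->]]; case: (@modn_rim _ _ hc) => [[? ->]|[? ->]];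
case: (@modn_rim _ _ hd) => [[? ->]|[? ->]];
move=> /orP[/eqP ?|/eqP ?] /orP[/eqP ?|/eqP ?] /eqP ?; apply/negP => /orP[/eqP ?|/eqP ?]; lia.
Qed.

Section Wheel.
Variable n : nat.
Notation c0 := (wheel_center n).
Notation adj := (wheel_adj n).

Lemma wadj_sym u v : adj u v = adj v u.
Proof.
rewrite /wheel_adj eq_sym; congr andb.
by case: (val u == 0%N); case: (val v == 0%N) => //=; rewrite orbC.
Qed.

Lemma wadj_irr u : adj u u = false.
Proof. by rewrite /wheel_adj eqxx. Qed.

Lemma wadj_neq u v : adj u v -> u != v.
Proof. by case/andP. Qed.

Lemma neq_c0 u : (u != c0) = (val u != 0%N).
Proof. by []. Qed.

Lemma wadj_c u : u != c0 -> adj c0 u.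
Proof. by move=> h; rewrite /wheel_adj eq_sym h /=. Qed.

Lemma wadj_c' u : u != c0 -> adj u c0.
Proof. by move=> h; rewrite wadj_sym wadj_c. Qed.

Lemma rim_adj u v : val u != 0%N -> val v != 0%N ->
  adj u v = (u != v) && ((val v == rim_next n u) || (val u == rim_next n v)).
Proof. by move=> hu hv; rewrite /wheel_adj (negbTE hu) (negbTE hv) /=. Qed.

Lemma nonadj b c d : (4 <= n)%N -> b != c0 -> c != c0 -> d != c0 ->
  adj b c -> adj c d -> b != d -> ~~ adj b d.
Proof.
rewrite !neq_c0 => h4 hb hc hd.
rewrite !rim_adj // => /andP[_ h1] /andP[_ h2] hbd.
rewrite hbd /=.
have bnd (x : 'I_n.+1) : val x != 0%N -> (0 < x <= n)%N.
  by move=> hx; rewrite lt0n hx -ltnS ltn_ord.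
apply: (nonadj_nat h4 (bnd _ hb) (bnd _ hc) (bnd _ hd) h1 h2).
by [].
Qed.

End Wheel.

Lemma pm1_neq (x y : int) : (x = 1 \/ x = -1) -> (y = 1 \/ y = -1) -> x != y -> x * y = -1.
Proof. by move=> [->|->] [->|->]. Qed.

Lemma pm1_mul (x y : int) : (x = 1 \/ x = -1) -> (y = 1 \/ y = -1) -> x * y = 1 \/ x * y = -1.
Proof. by move=> [->|->] [->|->]; auto. Qed.

Lemma rot4 (T : finType) (adj : rel T) (sigma : T -> T -> int) a b c d :
  neg_4cycle adj sigma a b c d -> neg_4cycle adj sigma b c d a.
Proof.
case=> hu /and4P[h1 h2 h3 h4] hs; split.
- by move: hu; rewrite -(rot_uniq 1).
- by rewrite h2 h3 h4 h1.
- by rewrite -hs; ring.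
Qed.

Lemma card_wheel n : #|'I_n.+1| = n.+1.
Proof. exact: card_ord. Qed.

Lemma center_case n (sigma : 'I_n.+1 -> 'I_n.+1 -> int) b x d :
  (4 <= n)%N -> signature (wheel_adj n) sigma -> compatible (wheel_adj n) sigma ->
  neg_4cycle (wheel_adj n) sigma (wheel_center n) b x d -> False.
Proof.
move=> h4 hsig hcomp [hu /and4P[h1 h2 h3 h4'] hs].
move: hu; rewrite /= !inE !negb_or => /andP[/and3P[h0b h0x h0d] /andP[/andP[hbx hbd] /andP[hxd _]]].
have hb : b != wheel_center n by rewrite eq_sym.
have hx : x != wheel_center n by rewrite eq_sym.
have hd : d != wheel_center n by rewrite eq_sym.
have nbd := nonadj h4 hb hx hd h2 h3 hbd.
have hw1 : is_walk (wheel_adj n) b d [:: x; d] by rewrite /is_walk /= h2 h3 eqxx.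
have hw2 : is_walk (wheel_adj n) b d [:: wheel_center n; d].
  by rewrite /is_walk /= wadj_c' // wadj_c // eqxx.
have hk : (2 < #|'I_n.+1|)%N by rewrite card_ord ltnS (leq_trans _ h4).
have hh : has_walk (wheel_adj n) 2 b d by apply/has_walkP; exists [:: x; d].
have [hD hwD hlt] := dist_spec hk hh.
have e2 : dist (wheel_adj n) b d = 2%N.
  case: (dist _ b d) hD hwD hlt => [|[|[|]]] //.
  - by move=> _ /has_walkP [p [hp hw]]; rewrite walk0 // (negbTE hbd) in hw.
  - move=> _ /has_walkP [p [hp hw]]; have [_ ab] := walk1 hp hw.
    by rewrite ab in nbd.
have := hcomp b d; rewrite e2.
have [sb0 _] := hsig _ _ h1.
have [sd0 _] := hsig _ _ h4'.
set s1 := walk_sign sigma b [:: x; d].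
set s2 := walk_sign sigma b [:: wheel_center n; d].
have hprod : s1 * s2 = -1.
  rewrite /s1 /s2 !sign2 -hs sb0 sd0; ring.
have hne : s1 != s2.
  apply/negP => /eqP e; move: hprod; rewrite e => hp.
  by have := sqr_ge0 s2; rewrite expr2 hp.
have hs1 : size [:: x; d] = dist (wheel_adj n) b d by rewrite e2.
have hs2 : size [:: wheel_center n; d] = dist (wheel_adj n) b d by rewrite e2.
have -> : sigma_min (wheel_adj n) sigma b d = -1.
  case: (eqVneq s1 1) => e.
    by apply: (smin_m1 hs2 hw2); rewrite -/s2 -e eq_sym.
  by apply: (smin_m1 hs1 hw1).
have -> : sigma_max (wheel_adj n) sigma b d = 1.
  case: (eqVneq s1 (-1)) => e.
    by apply: (smax_1 hs2 hw2); rewrite -/s2 -e eq_sym.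
  by apply: (smax_1 hs1 hw1).
by [].
Qed.

Lemma exists_walk n (u v : 'I_n.+1) : exists2 k, (k <= 2)%N & has_walk (wheel_adj n) k u v.
Proof.
case: (eqVneq u v) => [->|huv].
  by exists 0%N => //; apply/has_walkP; exists [::]; rewrite /is_walk /= eqxx.
case: (boolP (wheel_adj n u v)) => ha.
  by exists 1%N => //; apply/has_walkP; exists [:: v]; rewrite /is_walk /= ha eqxx.
case: (eqVneq u (wheel_center n)) => hu.
  by move: ha; rewrite hu wadj_c // -hu eq_sym.
case: (eqVneq v (wheel_center n)) => hv.
  by move: ha; rewrite hv wadj_c'.
exists 2%N => //; apply/has_walkP; exists [:: wheel_center n; v].
by rewrite /is_walk /= wadj_c' // wadj_c // eqxx.
Qed.

Theorem theorem3p2 (n : nat) (sigma : 'I_n.+1 -> 'I_n.+1 -> int) :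
  (4 <= n)%N ->
  signature (wheel_adj n) sigma ->
  compatible (wheel_adj n) sigma <->
  ~ (exists a b c d : 'I_n.+1,
        neg_4cycle (wheel_adj n) sigma a b c d /\
        wheel_center n \in [:: a; b; c; d]).
Proof.
move=> h4 hsig; split.
  move=> hcomp [a [b [c [d [hc hin]]]]].
  move: hin; rewrite !inE => /or4P[/eqP e|/eqP e|/eqP e|/eqP e].
  - by rewrite -e in hc; exact: (center_case h4 hsig hcomp hc).
  - by have := rot4 hc; rewrite -e => hc'; exact: (center_case h4 hsig hcomp hc').
  - by have := rot4 (rot4 hc); rewrite -e => hc'; exact: (center_case h4 hsig hcomp hc').
  - by have := rot4 (rot4 (rot4 hc)); rewrite -e => hc'; exact: (center_case h4 hsig hcomp hc').
move=> H u v.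
have [k hk2 hk] := exists_walk u v.
have hkT : (k < #|'I_n.+1|)%N by rewrite card_ord ltnS (leq_trans hk2) // (leq_trans _ h4).
have [hD hwD hlt] := dist_spec hkT hk.
have hD2 : (dist (wheel_adj n) u v <= 2)%N := leq_trans hD hk2.
case e0 : (dist (wheel_adj n) u v) => [|D]; first by rewrite !mulr0.
congr (_ * _).
have [p0 [hs0 hw0]] := has_walkP _ _ _ _ hwD.
case: D e0 => [|[|D]] e0; last by rewrite e0 in hD2.
-
  have hs1 : size p0 = 1%N by rewrite hs0 e0.
  have [ep0 ha] := walk1 hs1 hw0.
  apply: (compat_at hs0 hw0).
    by rewrite ep0 sign1; have [_ ] := hsig _ _ ha.
  move=> p hs hw; rewrite e0 in hs.
  by have [-> _] := walk1 hs hw; rewrite ep0.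
-
  have n0 : ~~ has_walk (wheel_adj n) 0 u v by apply: hlt; rewrite e0.
  have n1 : ~~ has_walk (wheel_adj n) 1 u v by apply: hlt; rewrite e0.
  have huv : u != v.
    apply: contra n0 => /eqP ->; apply/has_walkP; exists [::].
    by rewrite /is_walk /= eqxx.
  have nuv : ~~ wheel_adj n u v.
    apply: contra n1 => ha; apply/has_walkP; exists [:: v].
    by rewrite /is_walk /= ha eqxx.
  have pm s t : s \in [:: u; v] -> t \in [:: u; v] -> wheel_adj n s t ->
      sigma s t = 1 \/ sigma s t = -1.
    by move=> _ _ h; have [_] := hsig _ _ h.
  have symm s t : wheel_adj n s t -> sigma s t = sigma t s.
    by move=> h; have [] := hsig _ _ h.
  have pm1 s t : wheel_adj n s t -> sigma s t = 1 \/ sigma s t = -1.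
    by move=> h; have [_] := hsig _ _ h.
  have lemA w1 w2 : wheel_adj n u w1 -> wheel_adj n w1 v ->
      wheel_adj n u w2 -> wheel_adj n w2 v ->
      wheel_center n \in [:: u; w1; v; w2] ->
      sigma u w1 * sigma w1 v = sigma u w2 * sigma w2 v.
    move=> a1 b1 a2 b2 hin.
    case: (eqVneq w1 w2) => [-> //|hw12].
    apply/eqP; apply/negPn/negP => hne.
    have hpr := pm1_neq (pm1_mul (pm1 _ _ a1) (pm1 _ _ b1))
                        (pm1_mul (pm1 _ _ a2) (pm1 _ _ b2)) hne.
    apply: H; exists u, w1, v, w2; split => //; split.
    - rewrite /= !inE !negb_or huv (wadj_neq a1) (wadj_neq a2) hw12.
      by rewrite (wadj_neq b1) eq_sym (wadj_neq b2).
    - by rewrite a1 b1 wadj_sym b2 wadj_sym a2.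
    - by rewrite -hpr (symm _ _ b2) (symm _ _ a2); ring.
  have ref : exists w0, [/\ wheel_adj n u w0, wheel_adj n w0 v &
     forall w, wheel_adj n u w -> wheel_adj n w v ->
        wheel_center n \in [:: u; w0; v; w]].
    case: (boolP (wheel_center n \in [:: u; v])) => hc.
      have hs2 : size p0 = 2%N by rewrite hs0 e0.
      have [w0 [_ a0 b0]] := walk2 hs2 hw0; exists w0; split => // w _ _.
      by move: hc; rewrite !inE => /orP[->|->]; rewrite ?orbT.
    move: hc; rewrite !inE negb_or => /andP[hu hv].
    exists (wheel_center n); split; first by rewrite wadj_c' // eq_sym.
      by rewrite wadj_c // eq_sym.
    by move=> w _ _; rewrite !inE eqxx orbT.
  have [w0 [a0 b0 hcen]] := ref.
  have hs0' : size [:: w0; v] = dist (wheel_adj n) u v by rewrite e0.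
  have hw0' : is_walk (wheel_adj n) u v [:: w0; v] by rewrite /is_walk /= a0 b0 eqxx.
  apply: (compat_at hs0' hw0').
    by rewrite sign2; apply: pm1_mul; apply: pm1.
  move=> p hs hw; rewrite e0 in hs.
  have [w [-> a b]] := walk2 hs hw.
  by rewrite !sign2; symmetry; apply: lemA => //; apply: hcen.
Qed.
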